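(* For all integers $n\ge k\ge 2$ and $r\ge 0$, \[ \mathsf{opt}_{\operatorname{bandit}}^{\operatorname{adap}}(n,k,r)\ge \frac{(k-1)r}{2}. \]
   Context: Prediction with expert advice: $\mathcal{Y}=\{1,\dots,k\}$, $\mathcal{X}=[k]^n$, experts $h_i(x)=x_i$, $i=1,\dots,n$. $\mathcal{P}_r$ is the set of finite sequences of examples in $\mathcal{X}\times\mathcal{Y}$ on which some $h_i$ errs on at most $r$ examples. Bandit feedback: each round an adaptive adversary chooses $x_t$ from the history, the learner chooses a distribution $\pi^{(t)}$ (from history and $x_t$), the adversary, seeing $\pi^{(t)}$, chooses a distribution $\tau^{(t)}$; $\hat y_t\sim\pi^{(t)}$, $y_t\sim\tau^{(t)}$, and the learner learns only whether $\hat y_t=y_t$. The adversary must ensure that whenever the history is realizable, each $y_t$ in the support of $\tau^{(t)}$ keeps it realizable, where a history of (instance, correct/incorrect, prediction) triples is realizable if some choice of true labels agreeing with the observations yields a sequence in $\mathcal{P}_r$. $\mathsf{opt}_{\operatorname{bandit}}^{\operatorname{adap}}(n,k,r)=\inf_{\text{learner}}\sup_{\text{adversary}}$ expected number of mistakes ($\hat y_t\ne y_t$). *)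

(* Defs.v *)
From HB Require Import structures.
From mathcomp Require Import all_boot all_order all_algebra.
From mathcomp Require Import boolp classical_sets reals constructive_ereal ereal.
Set Implicit Arguments. Unset Strict Implicit. Unset Printing Implicit Defensive.
Import Order.TTheory GRing.Theory Num.Theory.
Local Open Scope ring_scope.
Local Open Scope classical_set_scope.

Section BanditGame.
Variables (R : realType) (n k r : nat).

(* Instance space X = [k]^n, label space Y = [k] (as 'I_k = {0,...,k-1}). *)
Definition inst := {ffun 'I_n -> 'I_k}.

(* Expert h_i(x) = x_i. P_r: some expert errs on at most r examples. *)
Definition in_Pr (s : seq (inst * 'I_k)) : Prop :=
  exists i : 'I_n, (count (fun p : inst * 'I_k => p.1 i != p.2) s <= r)%N.

(* Full history of play: triples (x_t, yhat_t, y_t). *)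
Definition full_hist := seq (inst * 'I_k * 'I_k).
Definition obs_hist := seq (inst * bool * 'I_k).

Definition view (h : full_hist) : obs_hist :=
  [seq (p.1.1, p.1.2 == p.2, p.1.2) | p <- h].

Definition realizable (o : obs_hist) : Prop :=
  exists ys : seq 'I_k, size ys = size o /\
    all2 (fun (q : inst * bool * 'I_k) (y : 'I_k) => (q.2 == y) == q.1.2) o ys /\
    in_Pr (zip [seq q.1.1 | q <- o] ys).

Definition is_dist (p : 'I_k -> R) : Prop :=
  (forall a, 0 <= p a) /\ \sum_(a < k) p a = 1.

Definition learner := obs_hist -> inst -> 'I_k -> R.
Definition valid_learner (L : learner) : Prop := forall o x, is_dist (L o x).

Definition adv_inst := full_hist -> inst.
Definition adv_label := full_hist -> inst -> ('I_k -> R) -> 'I_k -> R.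

Definition valid_adv (L : learner) (aX : adv_inst) (aT : adv_label) : Prop :=
  forall h : full_hist,
    let x := aX h in
    let pi := L (view h) x in
    let tau := aT h x pi in
    is_dist tau /\
    (realizable (view h) ->
       forall yh y : 'I_k, 0 < pi yh -> 0 < tau y ->
         realizable (view (rcons h (x, yh, y)))).

Fixpoint exp_mistakes (L : learner) (aX : adv_inst) (aT : adv_label)
    (T : nat) (h : full_hist) : R :=
  match T with
  | 0 => 0
  | T'.+1 =>
      let x := aX h in
      let pi := L (view h) x in
      let tau := aT h x pi in
      \sum_(yh < k) \sum_(y < k)
         pi yh * tau y * ((yh != y)%:R + exp_mistakes L aX aT T' (rcons h (x, yh, y)))
  end.

Definition opt_bandit_adap : \bar R :=
  ereal_inf [set ereal_sup
                 [set e | exists (T : nat) (aX : adv_inst) (aT : adv_label),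
                     valid_adv L aX aT /\ e = (exp_mistakes L aX aT T [::])%:E]
            | L in valid_learner].

End BanditGame.

(* Main.v *)
Require Import Defs.
From HB Require Import structures.
From mathcomp Require Import all_boot all_order all_algebra.
From mathcomp Require Import boolp classical_sets reals constructive_ereal ereal.
From mathcomp Require Import ring lra zify.
From Stdlib Require Import ClassicalEpsilon.
Import Order.TTheory GRing.Theory Num.Theory.
Local Open Scope ring_scope.

Lemma all2_rcons (S T : Type) (f : S -> T -> bool) s t x y :
  size s = size t -> all2 f (rcons s x) (rcons t y) = all2 f s t && f x y.
Proof.
elim: s t => [|a s IH] [|b t] //= => [_|[/IH ->]]; by rewrite ?andbT ?andbA.
Qed.

Section Pf.
Variables (R : realType) (n k' r : nat).
Hypothesis kn : (k'.+2 <= n)%N.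
Local Notation k := k'.+2.
Local Notation full := (full_hist n k).
Local Notation obs := (obs_hist n k).

Definition x0 : inst n k := [ffun i : 'I_n => inord (minn i k'.+1)].

Lemma x0_cover (c : 'I_k) : exists i : 'I_n, x0 i = c.
Proof.
have ci : (c < n)%N by apply: leq_trans kn.
exists (Ordinal ci); rewrite ffunE /=.
have -> : minn c k'.+1 = c by apply/minn_idPl; rewrite -ltnS.
by rewrite inord_val.
Qed.

Definition cost (c : 'I_k) (o : obs) : nat :=
  count (fun q : inst n k * bool * 'I_k => if q.1.2 then q.2 != c else q.2 == c) o.

Definition ax0 (o : obs) := all (fun q : inst n k * bool * 'I_k => q.1.1 == x0) o.

Definition other (c : 'I_k) : 'I_k := if c == ord0 then inord 1 else ord0.

Lemma other_neq c : other c != c.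
Proof.
rewrite /other; case: (c =P ord0) => [->|/eqP H]; last by rewrite eq_sym.
by apply/eqP => /(congr1 val); rewrite /= inordK.
Qed.

Lemma realizable_of_cost (o : obs) c : ax0 o -> (cost c o <= r)%N -> realizable r o.
Proof.
move=> Ho Hc.
exists [seq (if q.1.2 then q.2 else if q.2 == c then other c else c) | q <- o].
split; first by rewrite size_map.
split.
  elim: o Ho {Hc} => [|[[x b] yh] o IH] //= /andP[_ Ho].
  rewrite IH // andbT; case: b => /=; first by rewrite eqxx.
  case: (yh =P c) => [->|/eqP H]; last by rewrite (negbTE H).
  by apply/eqP/negbTE; rewrite eq_sym; exact: other_neq.
have [i Hi] := x0_cover c.
exists i; apply: leq_trans Hc; rewrite leq_eqVlt; apply/orP; left; apply/eqP.
elim: o Ho => [|[[x b] yh] o IH] //= /andP[/eqP -> Ho].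
rewrite IH // Hi; congr (_ + _)%N; case: b => /=; first by rewrite eq_sym.
case E: (yh == c); last by rewrite eqxx.
by rewrite eq_sym other_neq.
Qed.

Lemma cost_of_realizable (o : obs) : ax0 o -> realizable r o -> exists c, (cost c o <= r)%N.
Proof.
move=> Ho [ys [Hs [Ha [i Hi]]]]; exists (x0 i); apply: leq_trans Hi.
elim: o ys Hs Ha Ho => [|[[x b] yh] o IH] [|y ys] //= [Hs] /andP[Hq Ha] /andP[/eqP Hx Ho].
rewrite Hx; apply: leq_add; last exact: IH.
move: Hq; case: b => /=.
  by rewrite eqb_id => /eqP ->; rewrite eq_sym.
move/eqP => Hne; case E: (yh == x0 i) => //.
by move/eqP: E => <-; rewrite Hne.
Qed.

Lemma ext_exists (o : obs) : realizable r o ->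
  exists y, forall yh, realizable r (rcons o (x0, yh == y, yh)).
Proof.
move=> [ys [Hs [Ha [i Hi]]]]; exists (x0 i) => yh.
exists (rcons ys (x0 i)); split; first by rewrite !size_rcons Hs.
split; first by rewrite all2_rcons ?Hs // Ha /= eqxx.
exists i; rewrite map_rcons zip_rcons ?size_map ?Hs //.
rewrite -cats1 count_cat /= eqxx /=; by rewrite !addn0.
Qed.

Definition inc (yh y c : 'I_k) : bool := if yh == y then c != y else c == yh.

Lemma cost_rcons o yh y c : cost c (rcons o (x0, yh == y, yh)) = (cost c o + inc yh y c)%N.
Proof.
rewrite /cost -cats1 count_cat /= addn0 /inc; congr (_ + _)%N.
by case: eqP => [->|_]; rewrite eq_sym.
Qed.

Lemma ext_good o c yh : ax0 o -> (cost c o <= r)%N -> realizable r (rcons o (x0, yh == c, yh)).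
Proof.
move=> Ho Hc; apply: (@realizable_of_cost _ c).
  by rewrite /ax0 all_rcons eqxx.
rewrite cost_rcons /inc; case E: (yh == c); first by rewrite eqxx addn0.
by rewrite eq_sym E addn0.
Qed.


Definition tt_ (o : obs) (c : 'I_k) : nat := (r.+1 - cost c o)%N.
Definition Phi o := (\sum_(c < k) tt_ o c)%N.
Definition Mx o := (\max_(c < k) tt_ o c)%N.
Definition Psi o := (Phi o - Mx o)%N.
Definition inS (o : obs) c : bool := (cost c o <= r)%N.
Definition ssz o := (\sum_(c < k) inS o c)%N.
Definition Dl o yh y := (\sum_(c < k) (inS o c && inc yh y c))%N.

Lemma tt_rcons o yh y c :
  tt_ (rcons o (x0, yh == y, yh)) c = (tt_ o c - (inS o c && inc yh y c))%N.
Proof. rewrite /tt_ cost_rcons /inS; case: (inc yh y c); case: leqP => /=; lia. Qed.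

Lemma Phi_rcons o yh y : Phi o = (Phi (rcons o (x0, yh == y, yh)) + Dl o yh y)%N.
Proof.
rewrite /Phi /Dl -big_split /=; apply: eq_bigr => c _.
rewrite tt_rcons /tt_ /inS; case: (inc yh y c); case: leqP => /=; lia.
Qed.

Lemma Mx_le_Phi o : (Mx o <= Phi o)%N.
Proof. apply/bigmax_leqP => c _; rewrite /Phi (bigD1 c) //=; exact: leq_addr. Qed.

Lemma Psi_rcons o yh y :
  (Psi (rcons o (x0, yh == y, yh)) <= Psi o)%N /\
  (Psi o <= Psi (rcons o (x0, yh == y, yh)) + Dl o yh y)%N.
Proof.
set o' := rcons o _.
have Ht c : (tt_ o' c <= tt_ o c)%N by rewrite tt_rcons leq_subr.
have HMx : (Mx o' <= Mx o)%N.
  apply/bigmax_leqP => c _; apply: leq_trans (Ht c) _; exact: leq_bigmax.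
have Hk : (0 < #|'I_k|)%N by rewrite card_ord.
have [m Hm0] := @bigop.eq_bigmax _ (tt_ o) Hk.
have Hm : Mx o = tt_ o m by exact: Hm0.
have H1 : (tt_ o' m <= Mx o')%N by exact: leq_bigmax.
have H2 : ((inS o m && inc yh y m) <= Dl o yh y)%N.
  by rewrite /Dl (bigD1 m) //= leq_addr.
have H3 := tt_rcons o yh y m.
have H4 := Phi_rcons o yh y.
have H5 := Mx_le_Phi o. have H6 := Mx_le_Phi o'.
rewrite /Psi; rewrite -/o' in H3 H4; lia.
Qed.

Lemma Psi_le o y : inS o y -> (Psi o <= (ssz o).-1 * r.+1)%N.
Proof.
move=> Hy.
have Hs : ssz o = (1 + \sum_(c < k | c != y) inS o c)%N by rewrite /ssz (bigD1 y) //= Hy.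
have Hp : Phi o = (tt_ o y + \sum_(c < k | c != y) tt_ o c)%N by rewrite /Phi (bigD1 y).
have Hle : (\sum_(c < k | c != y) tt_ o c <= \sum_(c < k | c != y) inS o c * r.+1)%N.
  by apply: leq_sum => c _; rewrite /tt_ /inS; case: leqP => /=; lia.
rewrite -big_distrl /= in Hle.
have Hm : (tt_ o y <= Mx o)%N by exact: leq_bigmax.
rewrite /Psi Hs Hp add1n /=; lia.
Qed.

Lemma ssz_le o : (ssz o <= k)%N.
Proof.
apply: (@leq_trans (\sum_(c < k) 1)%N); last by rewrite sum_nat_const card_ord muln1.
by apply: leq_sum => c _; case: (inS o c).
Qed.

Lemma ssz_pos o y : inS o y -> (0 < ssz o)%N.
Proof. by move=> Hy; rewrite /ssz (bigD1 y) //= Hy. Qed.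

Lemma Dl_y o y : inS o y -> (Dl o y y <= (ssz o).-1)%N.
Proof.
move=> Hy.
have E1 : ssz o = (inS o y + \sum_(c < k | c != y) inS o c)%N by rewrite /ssz (bigD1 y).
have E2 : Dl o y y = ((inS o y && inc y y y) + \sum_(c < k | c != y) (inS o c && inc y y c))%N
  by rewrite /Dl (bigD1 y).
have E3 : (\sum_(c < k | c != y) (inS o c && inc y y c) <= \sum_(c < k | c != y) inS o c)%N.
  by apply: leq_sum => c _; case: (inS o c) => //=; exact: leq_b1.
have Hinc : inc y y y = false by rewrite /inc !eqxx.
rewrite Hinc andbF /= in E2.
rewrite E1 E2 Hy /=; by rewrite !add0n.
Qed.

Lemma Dl_other o yh y : yh != y -> (Dl o yh y <= 1)%N.
Proof.
move=> H; rewrite /Dl (bigD1 yh) //= big1 ?addn0 => [|c Hc]; first exact: leq_b1.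
by rewrite /inc (negbTE H) (negbTE Hc) andbF.
Qed.

Lemma sp_le (pi : 'I_k -> R) o y : is_dist pi -> (forall z, inS o z -> pi y <= pi z) ->
  (ssz o)%:R * pi y <= 1.
Proof.
move=> [H0 H1] Hmin; rewrite /ssz natr_sum mulr_suml -[X in _ <= X]H1; apply: ler_sum => c _.
case: (boolP (inS o c)) => Hc /=; rewrite ?mulr1n ?mulr0n ?mul1r ?mul0r //; exact: Hmin.
Qed.

Definition Qy (h : full) (pi : 'I_k -> R) (y : 'I_k) : Prop :=
  (realizable r (view h) -> forall yh, realizable r (view (rcons h (x0, yh, y)))) /\
  (ax0 (view h) -> realizable r (view h) ->
     inS (view h) y /\ forall z, inS (view h) z -> pi y <= pi z).

Lemma view_rcons (h : full) x yh y : view (rcons h (x, yh, y)) = rcons (view h) (x, yh == y, yh).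
Proof. by rewrite /view map_rcons. Qed.

Lemma Qy_ex h pi : exists y, Qy h pi y.
Proof.
case: (pselect (ax0 (view h) /\ realizable r (view h))) => [[Ha Hr]|Hn].
  have [c Hc] := cost_of_realizable _ Ha Hr.
  have [y Hy Hmin] := @Order.TotalTheory.arg_minP _ R _ c (inS (view h)) pi Hc.
  exists y; split => [_ yh|_ _]; first by rewrite view_rcons; exact: ext_good.
  by split => // z Hz; exact: Hmin.
case: (pselect (realizable r (view h))) => [Hr|Hr].
  have [y Hy] := ext_exists _ Hr.
  exists y; split => [_ yh|Ha _]; first by rewrite view_rcons; exact: Hy.
  by case: Hn.
by exists ord0; split => [H|_ H]; case: Hr.
Qed.

Definition yadv h pi : 'I_k := epsilon (inhabits ord0) (Qy h pi).
Lemma yadvP h pi : Qy h pi (yadv h pi).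
Proof. exact: (epsilon_spec (inhabits ord0) (Qy h pi) (Qy_ex h pi)). Qed.

Definition aX : adv_inst n k := fun _ => x0.
Definition aT : adv_label R n k := fun h _ pi y => (y == yadv h pi)%:R.

Lemma valid_aT L : valid_adv r L aX aT.
Proof.
move=> h /=; split.
  split => [y|]; first by rewrite ler0n.
  rewrite /aT (bigD1 (yadv h (L (view h) x0))) //= eqxx big1 ?addr0 // => i /negbTE ->.
  by [].
move=> Hr yh y _; rewrite /aT; case: eqP => [->|_]; last by rewrite ltxx.
move=> _; exact: (yadvP h _).1 Hr yh.
Qed.


Lemma exp_step (L : learner R n k) T h : exp_mistakes L aX aT T.+1 h =
  \sum_(yh < k) L (view h) x0 yh * ((yh != yadv h (L (view h) x0))%:R +
     exp_mistakes L aX aT T (rcons h (x0, yh, yadv h (L (view h) x0)))).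
Proof.
rewrite /=; apply: eq_bigr => yh _.
rewrite (bigD1 (yadv h (L (view h) x0))) //= /aT eqxx mulr1 big1 ?addr0 // => i /negbTE ->.
by rewrite mulr0 mul0r.
Qed.

Lemma num1 (p c a P : R) : 0 <= p -> p <= 1 -> a <= 1/2 -> P = 0 ->
  c * P <= p * (c * P - a * 0) + (1 + c * P - a) * (1 - p).
Proof. move=> *; subst; nra. Qed.

Lemma num2 (p c a g P m : R) : 0 <= p -> (m + 1) * p <= 1 -> 0 <= a -> a <= 1/2 -> 1 <= m ->
  g * P <= 1/2 - a ->
  (c + g) * P <= p * (c * P - a * m) + (1 + c * P - a) * (1 - p).
Proof.
move=> *.
have : 0 <= (1/2 - a) * (p * (m - 1)) by apply: mulr_ge0; nra.
nra.
Qed.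

Lemma main (L : learner R n k) (HL : valid_learner L) (a g : R) (N : nat) :
  0 <= a -> a <= 1/2 -> 0 <= g -> N%:R * g <= a -> g * (k'.+1 * r.+1)%:R <= 1/2 - a ->
  forall T, (T <= N)%N -> forall h, ax0 (view h) -> realizable r (view h) ->
  T%:R * g * (Psi (view h))%:R <= exp_mistakes L aX aT T h.
Proof.
move=> Ha0 Ha Hg HN Hga; elim=> [|T IH] HT h Hh Hr.
  by rewrite /= !mul0r.
rewrite exp_step.
set pi := L (view h) x0.
set y := yadv h pi.
have [Hpi0 Hpi1] := HL (view h) x0.
have [Hext Hgood] := yadvP h pi.
have [Hy Hmin] := Hgood Hh Hr.
have HE yh : T%:R * g * (Psi (rcons (view h) (x0, yh == y, yh)))%:R <=
    exp_mistakes L aX aT T (rcons h (x0, yh, y)).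
  rewrite -view_rcons; apply: IH; first exact: ltnW.
    by rewrite view_rcons /ax0 all_rcons eqxx.
  exact: Hext.
set c := T%:R * g.
have Hc0 : 0 <= c by apply: mulr_ge0.
have Hca : c <= a.
  apply: le_trans HN; apply: ler_wpM2r => //; rewrite ler_nat; exact: ltnW.
have Hterm yh : c * (Psi (view h))%:R - a * (Dl (view h) yh y)%:R <=
    exp_mistakes L aX aT T (rcons h (x0, yh, y)).
  apply: le_trans (HE yh).
  have [H1 H2] := Psi_rcons (view h) yh y.
  move: H1 H2; rewrite -!(ler_nat R) natrD => H1 H2.
  have HD : 0 <= (Dl (view h) yh y)%:R :> R by rewrite ler0n.
  rewrite -/c.
  have P1 : 0 <= c * ((Psi (rcons (view h) (x0, yh == y, yh)))%:R + (Dl (view h) yh y)%:R - (Psi (view h))%:R).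
    by apply: mulr_ge0 => //; rewrite subr_ge0.
  have P2 : 0 <= (a - c) * (Dl (view h) yh y)%:R by apply: mulr_ge0 => //; rewrite subr_ge0.
  nra.
have Hpos : (0 < ssz (view h))%N by exact: (ssz_pos _ _ Hy).
have Hsp : (ssz (view h))%:R * pi y <= 1 by apply: sp_le; [exact: HL | exact: Hmin].
have HPsi := Psi_le _ _ Hy.
have Hsk := ssz_le (view h).
have HDy := Dl_y _ _ Hy.
have Hrest : \sum_(yh < k | yh != y) pi yh = 1 - pi y.
  by have := Hpi1; rewrite (bigD1 y) //= => E; rewrite -E addrAC subrr add0r.
have HB : (1 + c * (Psi (view h))%:R - a) * (1 - pi y) <=
    \sum_(yh < k | yh != y) pi yh * ((yh != y)%:R + exp_mistakes L aX aT T (rcons h (x0, yh, y))).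
  rewrite -Hrest mulr_sumr; apply: ler_sum => yh Hyh.
  rewrite Hyh mulrC; apply: ler_wpM2l; first exact: Hpi0.
  have := Hterm yh; have := Dl_other (view h) _ _ Hyh.
  rewrite -(ler_nat R) => HD1 Ht.
  rewrite /=; nra.
rewrite (bigD1 y) //= eqxx /= add0r.
have HA : pi y * (c * (Psi (view h))%:R - a * ((ssz (view h)).-1)%:R) <=
    pi y * exp_mistakes L aX aT T (rcons h (x0, y, y)).
  apply: ler_wpM2l; first exact: Hpi0.
  apply: le_trans (Hterm y); apply: lerD => //; rewrite lerN2; apply: ler_wpM2l => //.
  by rewrite ler_nat.
apply: le_trans (lerD HA HB).
rewrite -natr1 mulrDl mul1r -/c.
move: Hsp HPsi Hsk HDy; case: (ssz (view h)) Hpos => [|m] // _ /= Hsp HPsi Hsk _.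
case: m Hsp HPsi Hsk => [|m] Hsp HPsi Hsk.
  rewrite mul0n in HPsi; have -> : Psi (view h) = 0%N by apply/eqP; rewrite -leqn0.
  rewrite mul1r in Hsp; have := Hpi0 y; nra.
apply: num2 => //.
- by rewrite -natr1 in Hsp.
- by rewrite ler1n.
- apply: le_trans Hga; apply: ler_wpM2l => //; rewrite ler_nat.
  apply: (leq_trans HPsi); apply: leq_mul => //.
Qed.

End Pf.

Theorem lemma4p11 (R : realType) (n k r : nat) :
  (2 <= k)%N -> (k <= n)%N ->
  ((((k - 1) * r)%:R / 2 : R)%:E <= opt_bandit_adap R n k r)%E.
Proof.
case: k => [|[|k']] // _ kn.
rewrite /opt_bandit_adap; apply/ereal_infP => _ [L HL <-].
set K := (k'.+1 * r.+1)%N.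
set N := (r * K)%N.
pose g : R := ((2 * r.+1 * K)%:R)^-1.
pose a : R := r%:R / (2 * r.+1)%:R.
have Hr1 : r.+1%:R != 0 :> R by rewrite pnatr_eq0.
have Hk1 : k'.+1%:R != 0 :> R by rewrite pnatr_eq0.
have H2 : 2%:R != 0 :> R by rewrite pnatr_eq0.
have HNg : N%:R * g = a.
  rewrite /N /K /g /a !natrM; field; by rewrite ?nat1r ?pnatr_eq0.
have Hga : g * K%:R = 1/2 - a.
  rewrite /K /g /a !natrM -natr1; field; by rewrite ?nat1r ?pnatr_eq0.
have Hg : 0 <= g by rewrite invr_ge0 ler0n.
have Ha0 : 0 <= a by rewrite divr_ge0 ?ler0n.
have Ha : a <= 1/2.
  have : 0 <= g * K%:R by rewrite mulr_ge0 ?ler0n.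
  rewrite Hga; lra.
have HP0 : Psi n k' r [::] = K.
  have Ht : forall c, tt_ n k' r [::] c = r.+1 by move=> c; rewrite /tt_ /cost /= subn0.
  have HPhi : Phi n k' r [::] = (k'.+2 * r.+1)%N.
    by rewrite /Phi (eq_bigr _ (fun c _ => Ht c)) sum_nat_const card_ord.
  have HMx : Mx n k' r [::] = r.+1.
    apply/eqP; rewrite eqn_leq; apply/andP; split.
      by apply/bigmax_leqP => c _; rewrite Ht.
    by rewrite -(Ht ord0); exact: leq_bigmax.
  rewrite /Psi HPhi HMx /K; lia.
have Hm := @main R n k' r kn L HL a g N Ha0 Ha Hg (ltac:(by rewrite HNg)) (ltac:(by rewrite Hga)) N (leqnn N) [::] isT.
apply: le_trans (ereal_sup_ubound _); last first.
  exists N, (aX n k'), (aT R n k' r); split; first exact: valid_aT.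
  reflexivity.
rewrite lee_fin; apply: le_trans (Hm _).
  rewrite HP0 HNg /a /K; rewrite subSS subn0 !natrM -nat1r; rewrite le_eqVlt; apply/orP; left; apply/eqP; field.
  by rewrite ?nat1r ?pnatr_eq0.
exists [::]; split => //; split => //; exists (Ordinal (leq_trans (ltn0Sn k'.+1) kn)) => //.
Qed.
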